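(* Let $\mathcal{I}$ be an ideal on $\omega$. Then (1) $\mathrm{FIN}\otimes\mathcal{I}\notin P^-$, and (2) $\rho^{(\mathrm{FIN}\otimes\mathcal{I})}\in P^-$ (for any choice of almost disjoint family $\mathcal{A}$ and enumeration of $(\mathrm{FIN}\otimes\mathcal{I})^+$ in its definition).
   Context: An ideal on a set $X$: $\mathcal{J}\subseteq\mathcal{P}(X)$ with $\emptyset\in\mathcal{J}$, $X\notin\mathcal{J}$, closed under finite unions and subsets, containing all finite sets; $\mathcal{J}^+=\mathcal{P}(X)\setminus\mathcal{J}$. $\mathrm{FIN}\otimes\mathcal{I}$ is the ideal on $\omega\times\omega$: $A\in\mathrm{FIN}\otimes\mathcal{I}$ iff $\{n:\{k:(n,k)\in A\}\notin\mathcal{I}\}$ is finite. Definition of $\rho^{(\mathrm{FIN}\otimes\mathcal{I})}$: let $\mathcal{A}=\{A_\alpha:\alpha<\mathfrak{c}\}$ be an almost disjoint family on $\omega$ (pairwise distinct infinite subsets of $\omega$ with pairwise finite intersections), $(\mathrm{FIN}\otimes\mathcal{I})^+=\{B_\alpha:\alpha<\mathfrak{c}\}$ an enumeration, $P_n=\{n\}\times\omega$, $\overline{\mathcal{A}}=\{A\setminus K:A\in\mathcal{A},K\in[\omega]^{<\omega}\}$, and $\rho^{(\mathrm{FIN}\otimes\mathcal{I})}\colon\overline{\mathcal{A}}\to[\omega\times\omega]^\omega$, $\rho^{(\mathrm{FIN}\otimes\mathcal{I})}(A_\alpha\setminus K)=B_\alpha\setminus\bigcup\{P_n:n<\max(K\cap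 A_\alpha)\}$, with $\max\emptyset=0$. This is a partition regular function (domain $\overline{\mathcal{A}}\subseteq[\omega]^\omega$, values in $[\omega\times\omega]^\omega$) with $\mathcal{I}_{\rho}=\mathrm{FIN}\otimes\mathcal{I}$. For a function $\rho\colon\mathcal{F}\to[\Lambda]^\omega$, $\mathcal{F}\subseteq[\Omega]^\omega$, let $\mathcal{I}_\rho=\{A\subseteq\Lambda:\forall F\in\mathcal{F}\ \rho(F)\not\subseteq A\}$; $\rho\in P^-$ means: for every decreasing $A_0\supseteq A_1\supseteq\dots$ of subsets of $\Lambda$ with $A_0\notin\mathcal{I}_\rho$ and $A_n\setminus A_{n+1}\in\mathcal{I}_\rho$ for all $n$, there is $F\in\mathcal{F}$ with $\rho(F)\subseteq A_0$ such that for each $n$ some finite $K\subseteq\Omega$ has $\rho(F\setminus K)\subseteq A_n$. For an ideal $\mathcal{J}$ on $\Lambda$, $\mathcal{J}\in P^-$ means: for every decreasing $A_0\supseteq A_1\supseteq\dots$ with $A_0\in\mathcal{J}^+$ and $A_n\setminus A_{n+1}\in\mathcal{J}$ there is $B\in\mathcal{J}^+$, $B\subseteq A_0$, with $B\setminus A_n$ finite for each $n$. *)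

(* Defs.v *)
From mathcomp Require Import all_boot.
From mathcomp Require Import boolp classical_sets cardinality.
Set Implicit Arguments. Unset Strict Implicit. Unset Printing Implicit Defensive.
Local Open Scope classical_set_scope.

Definition is_ideal (X : Type) (J : set (set X)) : Prop :=
  [/\ J set0, ~ J setT,
      (forall A B, J A -> J B -> J (A `|` B)),
      (forall A B, B `<=` A -> J A -> J B) &
      (forall A, finite_set A -> J A)].

Definition positive (X : Type) (J : set (set X)) : set (set X) := ~` J.

Definition FINxI (I : set (set nat)) : set (set (nat * nat)) :=
  fun A => finite_set [set n | ~ I [set k | A (n, k)]].

Definition Pminus_ideal (X : Type) (J : set (set X)) : Prop :=
  forall A : nat -> set X,
    (forall n, A n.+1 `<=` A n) -> ~ J (A 0) ->
    (forall n, J (A n `\` A n.+1)) ->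
    exists B : set X, [/\ ~ J B, B `<=` A 0 & forall n, finite_set (B `\` A n)].

Definition Irho (Om La : Type) (F : set (set Om)) (rho : set Om -> set La)
  : set (set La) :=
  fun A => forall G, F G -> ~ (rho G `<=` A).

Definition Pminus_fun (Om La : Type) (F : set (set Om)) (rho : set Om -> set La)
  : Prop :=
  forall A : nat -> set La,
    (forall n, A n.+1 `<=` A n) -> ~ Irho F rho (A 0) ->
    (forall n, Irho F rho (A n `\` A n.+1)) ->
    exists G, [/\ F G, rho G `<=` A 0 &
      forall n, exists K : set Om, finite_set K /\ rho (G `\` K) `<=` A n].

(* max of a set of naturals, with max of the empty set = 0 *)
Definition maxset (S : set nat) : nat :=
  xget 0%N (fun n => S n /\ forall m, S m -> (m <= n)%N).

Definition column (n : nat) : set (nat * nat) := [set p | p.1 = n].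

Definition almost_disjoint_family (Idx : Type) (A : Idx -> set nat) : Prop :=
  [/\ (forall a b, A a = A b -> a = b),
      (forall a, infinite_set (A a)) &
      (forall a b, a <> b -> finite_set (A a `&` A b))].

Definition Abar (Idx : Type) (A : Idx -> set nat) : set (set nat) :=
  fun X => exists a K, finite_set K /\ X = A a `\` K.

Definition is_rho_FINxI (Idx : Type) (A : Idx -> set nat)
  (B : Idx -> set (nat * nat)) (rho : set nat -> set (nat * nat)) : Prop :=
  forall a K, finite_set K ->
    rho (A a `\` K) =
      B a `\` \bigcup_(n in [set n | (n < maxset (K `&` A a))%N]) column n.

(* Main.v *)
Require Import Defs.
From Stdlib Require Import Classical.
From mathcomp Require Import all_boot.
From mathcomp Require Import boolp classical_sets cardinality.
From mathcomp Require Import finmap.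
Local Open Scope classical_set_scope.

Lemma fin_nat_bounded (S : set nat) : finite_set S -> exists b, forall x, S x -> (x < b)%N.
Proof.
move=> /finite_fsetP [X ->].
suff H : forall s : seq nat, exists b, forall x, x \in s -> (x < b)%N.
  have [b Hb] := H (enum_fset X); exists b => x /= Hx; exact: Hb.
elim=> [|y s [b Hb]]; first by exists 0%N.
exists (maxn b y.+1) => x; rewrite in_cons => /orP [/eqP ->|/Hb Hx].
  by rewrite leq_max leqnn orbT.
by rewrite leq_max Hx.
Qed.

Lemma inf_nat_ge (S : set nat) b : infinite_set S -> exists x, S x /\ (b <= x)%N.
Proof.
move=> HS; apply: NNPP => Hn; apply: HS.
apply: (@sub_finite_set _ _ `I_b); last exact: finite_II.
move=> x Sx /=; rewrite ltnNge; apply/negP => Hbx; apply: Hn; by exists x.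
Qed.

Fixpoint seqm (f : nat -> nat -> nat) (n : nat) : nat :=
  match n with 0 => f 0%N 0%N | n'.+1 => f n (seqm f n') end.

Section S.
Variable I : set (set nat).
Hypothesis HI : is_ideal I.

Definition sec (C : set (nat * nat)) n := [set k | C (n, k)].
Definition bad (C : set (nat * nat)) := [set n | ~ I (sec C n)].

Lemma FIN_sub B C : B `<=` C -> FINxI I C -> FINxI I B.
Proof.
case: HI => _ _ _ Hsub _ BC; apply: sub_finite_set => n /= HB HC; apply: HB.
apply: (Hsub _ _ _ HC) => k /=; exact: BC.
Qed.

Lemma FIN_U B C : FINxI I B -> FINxI I C -> FINxI I (B `|` C).
Proof.
case: HI => _ _ HU _ _ HB HC.
apply: (@sub_finite_set _ _ (bad B `|` bad C)); last by rewrite finite_setU.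
move=> n /= Hn; apply: NNPP => Hn'; apply: Hn.
have -> : [set k | (B `|` C) (n, k)] = sec B n `|` sec C n by [].
apply: HU; apply: NNPP => H; apply: Hn'; by [left | right].
Qed.

Lemma FIN_cols M : FINxI I (\bigcup_(n in [set n | (n < M)%N]) column n).
Proof.
case: HI => H0 _ _ Hsub _.
apply: (@sub_finite_set _ _ `I_M); last exact: finite_II.
move=> n /= Hn; rewrite ltnNge; apply/negP => HMn; apply: Hn.
apply: (Hsub _ _ _ H0) => k /= [j /= Hj]; rewrite /column /= => Ejn.
by move: Hj; rewrite -Ejn ltnNge HMn.
Qed.

End S.

Theorem proposition5p3 (I : set (set nat)) (HI : is_ideal I) :
  ~ Pminus_ideal (FINxI I) /\
  (forall (Idx : Type) (A : Idx -> set nat) (B : Idx -> set (nat * nat)),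
     almost_disjoint_family A ->
     (forall a b, B a = B b -> a = b) ->
     (forall Y, positive (FINxI I) Y <-> exists a, B a = Y) ->
     forall rho : set nat -> set (nat * nat),
       is_rho_FINxI A B rho ->
       Pminus_fun (Abar A) rho).
Proof.
have HI' := HI; case: HI' => HI0 HIT HIU HIsub HIfin.
split.
  move=> HP.
  have := HP (fun n => [set p : nat * nat | (n <= p.1)%N]).
  case.
  - by move=> n p /= /ltnW.
  - move=> Hfin; apply: infinite_nat; apply: (sub_finite_set _ Hfin).
    move=> n _ /= HIn; apply: HIT.
    by apply: (HIsub _ _ _ HIn).
  - move=> n; apply: (@sub_finite_set _ _ [set n]); last exact: finite_set1.
    move=> j /= Hj; apply: NNPP => Hjn; apply: Hj; apply: (HIsub _ _ _ HI0).
    move=> k /= [H1 H2]; apply: Hjn; apply/eqP; rewrite eqn_leq H1 /=.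
    by rewrite andbT leqNgt; apply/negP.
  move=> Bs [HBs _ Hfin]; apply: HBs.
  apply: (@sub_finite_set _ _ set0); last exact: finite_set0.
  move=> j /= Hj; apply: Hj; apply: HIfin.
  apply: (@sub_finite_set _ _ (snd @` (Bs `\` [set p | (j.+1 <= p.1)%N]))).
    move=> k /= Hk; exists (j, k) => //; split => //=; by rewrite ltnn.
  exact/finite_image/Hfin.
move=> Idx A B [_ Ainf _] _ HB rho Hrho C decC posC0 HC.
have Bpos : forall a, ~ FINxI I (B a) by move=> a; apply/(HB (B a)); exists a.
have rhosub : forall a K, finite_set K -> rho (A a `\` K) `<=` B a.
  by move=> a K fK; rewrite Hrho // => p [].
have IrhoFIN : forall Y, Irho (Abar A) rho Y -> FINxI I Y.
  move=> Y HY; apply: NNPP => /(HB Y) [a Ea].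
  apply: (HY (A a `\` set0)); first by exists a, set0; split => //; exact: finite_set0.
  rewrite -Ea; apply: rhosub; exact: finite_set0.
have FINIrho : forall Y, FINxI I Y -> Irho (Abar A) rho Y.
  move=> Y HY G [a [K [fK ->]]] Hsub; apply: (Bpos a).
  set M := Defs.maxset (classical_sets.setI K (A a)).
  apply: (@FIN_sub I HI _ (Y `|` \bigcup_(n in [set n | (n < M)%N]) column n)).
    move=> p Bp; apply: NNPP => Hp; apply: (Hp); left; apply: Hsub.
    rewrite Hrho //; split => // Hc; apply: Hp; by right.
  apply: FIN_U => //; exact: FIN_cols.
have C0pos : ~ FINxI I (C 0%N) by move=> H; apply: posC0; exact: FINIrho.
have decC' : forall n j, (n <= j)%N -> C j `<=` C n.
  move=> n j /subnK <-; elim: (j - n)%N => [|d IH] //= p Hp.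
  apply: IH; exact: decC.
have D : forall n, FINxI I (C 0%N `\` C n).
  elim=> [|n IH].
    apply: (@FIN_sub I HI _ set0); first by move=> p [].
    apply: (@sub_finite_set _ _ set0); last exact: finite_set0.
    move=> j /= Hj; apply: Hj; apply: HIsub HI0; by move=> k.
  apply: (@FIN_sub I HI _ ((C 0%N `\` C n) `|` (C n `\` C n.+1))).
    move=> p [H0 Hn]; case: (pselect (C n p)) => Hc; [right | left] => //.
  apply: FIN_U => //; exact: IrhoFIN.
have Cpos : forall n, ~ FINxI I (C n).
  move=> n Hn; apply: C0pos.
  apply: (@FIN_sub I HI _ ((C 0%N `\` C n) `|` C n)).
    move=> p Hp; case: (pselect (C n p)) => Hc; [right | left] => //.
  exact: FIN_U.
pose f n b := xget 0%N [set m | (b < m)%N /\ bad I (C n) m].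
have Hf : forall n b, (b < f n b)%N /\ bad I (C n) (f n b).
  move=> n b; apply: (@xgetPex _ 0%N [set m | (b < m)%N /\ bad I (C n) m]).
  have [x [Hx Hbx]] := @inf_nat_ge _ b.+1 (Cpos n).
  by exists x.
pose m := seqm f.
have Hm : forall n, bad I (C n) (m n).
  by case=> [|n]; rewrite /m /=; apply: (proj2 (Hf _ _)).
have HmS : forall n, (m n < m n.+1)%N by move=> n; rewrite /m /=; apply: (proj1 (Hf _ _)).
have Hmlt : forall j n, (j < n)%N -> (m j < m n)%N.
  move=> j n /subnK <-; elim: (n - j.+1)%N => [|d IH] /=; first exact: HmS.
  apply: (ltn_trans IH); exact: HmS.
have Hmge : forall n, (n <= m n)%N.
  elim=> [|n IH] //; apply: (leq_ltn_trans IH); exact: HmS.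
pose Bs := [set p : nat * nat | exists n, C n p /\ p.1 = m n].
have BsC0 : Bs `<=` C 0%N by move=> p [n [Hp _]]; exact: (decC' 0%N n).
have Bspos : ~ FINxI I Bs.
  move=> /fin_nat_bounded [b Hb].
  have : ~ (m b < b)%N by rewrite ltnNge Hmge.
  apply; apply: Hb => HIs.
  apply: (Hm b); apply: HIsub HIs => k Hk; by exists b.
have BsCn : forall n p, Bs p -> ~ C n p -> (p.1 < m n)%N.
  move=> n p [j [Hj Ej]] Hn; rewrite Ej; apply: Hmlt.
  rewrite ltnNge; apply/negP => Hnj; apply: Hn; exact: (decC' n j).
have [a Ea] : exists a, B a = Bs by apply/HB.
exists (A a `\` set0); split.
- by exists a, set0; split => //; exact: finite_set0.
- move=> p /(rhosub a set0 (finite_set0 _)); rewrite Ea; exact: BsC0.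
move=> n.
have [k [Ak Hk]] := @inf_nat_ge _ (m n) (Ainf a).
exists [set k]; split; first exact: finite_set1.
rewrite setD0 Hrho; last exact: finite_set1.
have Mk : Defs.maxset ([set k] `&` A a) = k.
  rewrite /Defs.maxset.
  pose P : set nat := fun z => ([set k] `&` A a) z /\ (forall q, ([set k] `&` A a) q -> (q <= z)%N).
  have : P (xget 0%N P).
    apply: (@xgetPex _ 0%N P); exists k; split => // q [-> _] //.
  by move=> [[-> _] _].
rewrite Mk; move=> p [Bp Hp]; rewrite Ea in Bp.
apply: NNPP => Hn; apply: Hp; exists p.1 => //=.
exact: (leq_trans (BsCn n p Bp Hn) Hk).
Qed.
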